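(* Let $V$ be a separable Banach space, $\alpha>1/2$, $\beta\in(0,1)$ with $\alpha(1+\beta)>1$, $A\in C^\alpha_tC^\beta_V$, $x_0\in V$, and let $x\in C^\alpha_tV$ be a solution to $x_t=x_0+\int_0^tA(\mathrm{d} s,x_s)$, $t\in[0,T]$. Then there exists $C=C(\alpha,\beta,T)$ such that \[ \llbracket x\rrbracket_\alpha\le C(1+\|A\|^2_{\alpha,\beta}),\qquad\|x\|_\alpha\le C(1+\|x_0\|_V+\|A\|^2_{\alpha,\beta}). \]
   Context: Fix $T>0$. For a path $f:[0,T]\to V$, $f_{s,t}=f_t-f_s$, $\llbracket f\rrbracket_\alpha=\sup_{s<t}\|f_{s,t}\|_V/|t-s|^\alpha$, $\|f\|_\alpha=\sup_t\|f_t\|_V+\llbracket f\rrbracket_\alpha$, $C^\alpha_tV$ the paths with finite $\|\cdot\|_\alpha$ (here $\alpha<1$). For $g:V\to V$, $\|g\|_\beta=\sup_{x\ne y}\|g(x)-g(y)\|_V/\|x-y\|_V^\beta+\sup_x\|g(x)\|_V$. A field $A:[0,T]\times V\to V$ with $A(0,\cdot)=0$, $A_{s,t}(x)=A(t,x)-A(s,x)$, is in $C^\alpha_tC^\beta_V$ if $\|A\|_{\alpha,\beta}=\sup_{s<t}\|A_{s,t}\|_\beta/|t-s|^\alpha<\infty$. For $x\in C^\alpha_tV$ with $\alpha(1+\beta)>1$, $\int_s^tA(\mathrm{d} r,x_r)=\lim_{|\Pi|\to0}\sum_iA_{t_i,t_{i+1}}(x_{t_i})$ over partitions of $[s,t]$.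 *)

(* Defs.v *)
From HB Require Import structures.
From mathcomp Require Import all_boot all_order all_algebra.
From mathcomp Require Import all_classical all_reals all_analysis.
Set Implicit Arguments. Unset Strict Implicit. Unset Printing Implicit Defensive.
Import Order.TTheory GRing.Theory Num.Theory.
Import numFieldNormedType.Exports.
Local Open Scope classical_set_scope.
Local Open Scope ring_scope.

Section Defs.
Variable R : realType.

Definition separable (V : normedModType R) : Prop :=
  exists D : set V, countable D /\ closure D = setT.

Definition hoelder_semi (V : normedModType R) (alpha T : R) (f : R -> V) : \bar R :=
  ereal_sup [set r : \bar R | exists s t : R,
     [/\ 0 <= s, s < t, t <= T &
         r = (`|f t - f s| / (t - s) `^ alpha)%:E]].

Definition sup_norm (V : normedModType R) (T : R) (f : R -> V) : \bar R :=
  ereal_sup [set r : \bar R | exists t : R, [/\ 0 <= t, t <= T & r = (`|f t|)%:E]].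

Definition hoelder_norm (V : normedModType R) (alpha T : R) (f : R -> V) : \bar R :=
  (sup_norm T f + hoelder_semi alpha T f)%E.

Definition fnorm_beta (V : normedModType R) (beta : R) (g : V -> V) : \bar R :=
  (ereal_sup [set r : \bar R | exists x y : V,
      x != y /\ r = (`|g x - g y| / `|x - y| `^ beta)%:E]
   + ereal_sup [set r : \bar R | exists x : V, r = (`|g x|)%:E])%E.

Definition incr (V : normedModType R) (A : R -> V -> V) (s t : R) : V -> V :=
  fun v => A t v - A s v.

Definition field_norm (V : normedModType R) (alpha beta T : R)
    (A : R -> V -> V) : \bar R :=
  ereal_sup [set r : \bar R | exists s t : R,
     [/\ 0 <= s, s < t, t <= T &
         r = (fnorm_beta beta (incr A s t) * (((t - s) `^ alpha)^-1)%:E)%E]].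

(* pts = [:: t_1; ...; t_n] with s = t_0 < t_1 < ... < t_n = t *)
Definition is_partition (s t : R) (pts : seq R) : Prop :=
  sorted <%R (s :: pts) /\ last s pts = t.

Definition mesh (s : R) (pts : seq R) : R :=
  \big[Num.max/0]_(ab <- zip (s :: pts) pts) (ab.2 - ab.1).

Definition riemann_sum (V : normedModType R) (A : R -> V -> V) (x : R -> V)
    (s : R) (pts : seq R) : V :=
  \sum_(ab <- zip (s :: pts) pts) incr A ab.1 ab.2 (x ab.1).

Definition young_integral_is (V : normedModType R) (A : R -> V -> V)
    (x : R -> V) (s t : R) (I : V) : Prop :=
  forall e : R, 0 < e -> exists d : R, 0 < d /\
    forall pts : seq R, is_partition s t pts -> mesh s pts < d ->
      `|riemann_sum A x s pts - I| < e.

End Defs.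

(* Main.v *)
Require Import Defs.
From HB Require Import structures.
From mathcomp Require Import all_boot all_order all_algebra.
From mathcomp Require Import all_classical all_reals all_analysis.
From mathcomp Require Import ring lra.
Import Order.TTheory GRing.Theory Num.Theory.
Import numFieldNormedType.Exports.
Local Open Scope classical_set_scope.
Local Open Scope ring_scope.
Set Implicit Arguments. Unset Strict Implicit. Unset Printing Implicit Defensive.

Section Aux.
Variable R : realType.
Variable V : normedModType R.
Implicit Types (s t u v alpha beta T K a : R).

Lemma semi_ub (alpha T K : R) (x : R -> V) :
  (forall s t, 0 <= s -> s < t -> t <= T -> `|x t - x s| <= K * (t - s) `^ alpha) ->
  (hoelder_semi alpha T x <= K%:E)%E.
Proof.
move=> H; apply: ge_ereal_sup => r [s [t [hs hst htT ->]]].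
rewrite lee_fin ler_pdivrMr ?powR_gt0 ?subr_gt0 //; exact: H.
Qed.

Lemma supn_ub (T K : R) (x : R -> V) :
  (forall t, 0 <= t -> t <= T -> `|x t| <= K) -> (sup_norm T x <= K%:E)%E.
Proof.
move=> H; apply: ge_ereal_sup => r [t [ht htT ->]].
rewrite lee_fin; exact: H.
Qed.

Lemma semi_fin (alpha T : R) (x : R -> V) : 0 < T ->
  (hoelder_norm alpha T x < +oo)%E ->
  exists M, forall s t, 0 <= s -> s < t -> t <= T -> `|x t - x s| <= M * (t - s) `^ alpha.
Proof.
move=> T0 Hf.
have Hs : (`|x 0|%:E <= sup_norm T x)%E.
  by apply: ereal_sup_ubound; exists 0; split => //; apply: ltW.
have Hh : ((`|x T - x 0| / (T - 0) `^ alpha)%:E <= hoelder_semi alpha T x)%E.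
  by apply: ereal_sup_ubound; exists 0, T; split.
move: Hf Hs Hh; rewrite /hoelder_norm.
case: (sup_norm T x) => [r| |]; case E: (hoelder_semi alpha T x) => [M| |] //=.
move=> _ _ _; exists M => s t hs hst htT.
rewrite -ler_pdivrMr ?powR_gt0 ?subr_gt0 // -lee_fin -E.
by apply: ereal_sup_ubound; exists s, t; split.
Qed.

End Aux.
Section Aux2.
Variable R : realType.
Variable V : normedModType R.

Lemma field_bd (alpha beta T a : R) (A : R -> V -> V) s t :
  field_norm alpha beta T A = a%:E -> 0 <= s -> s < t -> t <= T ->
  forall v y z, v != y ->
  `|incr A s t v - incr A s t y| / `|v - y| `^ beta + `|incr A s t z|
    <= a * (t - s) `^ alpha.
Proof.
move=> Ha hs hst htT v y z vy.
have H1 : (fnorm_beta beta (incr A s t) * (((t - s) `^ alpha)^-1)%:E <= a%:E)%E.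
  by rewrite -Ha; apply: ereal_sup_ubound; exists s, t; split.
have H2 : ((`|incr A s t v - incr A s t y| / `|v - y| `^ beta + `|incr A s t z|)%:E
    <= fnorm_beta beta (incr A s t))%E.
  rewrite EFinD; apply: leeD; apply: ereal_sup_ubound; [by exists v, y | by exists z].
have c0 : 0 < (t - s) `^ alpha by rewrite powR_gt0 // subr_gt0.
have := lee_wpmul2r (x := (((t - s) `^ alpha)^-1)%:E) _ H2.
rewrite lee_fin invr_ge0 (ltW c0) => /(_ isT) H3.
have := le_trans H3 H1; rewrite -EFinM lee_fin.
by rewrite -/(_ / _) ler_pdivrMr.
Qed.

Lemma field_bds (alpha beta T a : R) (A : R -> V -> V) (w : V) :
  w != 0 -> 0 < T -> field_norm alpha beta T A = a%:E ->
  [/\ 0 <= a,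
   (forall s t, 0 <= s -> s < t -> t <= T -> forall v y,
     `|incr A s t v - incr A s t y| <= a * (t - s) `^ alpha * `|v - y| `^ beta) &
   (forall s t, 0 <= s -> s < t -> t <= T -> forall z,
     `|incr A s t z| <= a * (t - s) `^ alpha)].
Proof.
move=> w0 T0 Ha.
have w0' : w != 0 - 0 by rewrite subr0.
have gen : forall s t, 0 <= s -> s < t -> t <= T ->
   [/\ 0 <= a,
   (forall v y,
     `|incr A s t v - incr A s t y| <= a * (t - s) `^ alpha * `|v - y| `^ beta) &
   (forall z, `|incr A s t z| <= a * (t - s) `^ alpha)].
  move=> s t hs hst htT.
  have c0 : 0 < (t - s) `^ alpha by rewrite powR_gt0 // subr_gt0.
  have Hw := field_bd Ha hs hst htT.
  have ge0 : forall v y, v != y -> 0 <= `|incr A s t v - incr A s t y| / `|v - y| `^ beta.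
    by move=> v y _; rewrite divr_ge0 // powR_ge0.
  have a0 : 0 <= a.
    have H := Hw w 0 0 w0.
    have : 0 <= a * (t - s) `^ alpha.
      by apply: le_trans H; rewrite addr_ge0 // ge0 // eq_sym.
    by rewrite pmulr_lge0.
  split=> //.
    move=> v y; have [->|vy] := eqVneq v y.
      by rewrite subrr normr0 mulr_ge0 ?powR_ge0 // mulr_ge0 // ltW.
    have := Hw v y 0 vy.
    have p0 : 0 < `|v - y| `^ beta by rewrite powR_gt0 // normr_gt0 subr_eq0.
    move=> H; have H' : `|incr A s t v - incr A s t y| / `|v - y| `^ beta <= a * (t - s) `^ alpha.
      by apply: le_trans H; rewrite lerDl.
    by rewrite -ler_pdivrMr.
  move=> z.
  have [wz|wz] := eqVneq (z + w) z.
    have ew : w = (z + w) - z by rewrite addrC addKr.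
    by move: w0; rewrite ew wz subrr eqxx.
  have := Hw (z + w) z z wz.
  move=> H; apply: le_trans H; rewrite lerDr; apply: ge0.
  exact: wz.
split.
- by have [] := gen 0 T (lexx 0) T0 (lexx T).
- by move=> s t hs hst htT; have [] := gen s t hs hst htT.
- by move=> s t hs hst htT; have [] := gen s t hs hst htT.
Qed.

End Aux2.
Section Grid.
Variable R : realType.
Variable V : normedModType R.

Lemma zip_grid (f : nat -> R) m n :
  zip (f m :: map f (iota m.+1 n)) (map f (iota m.+1 n)) =
  map (fun i => (f i, f i.+1)) (iota m n).
Proof.
by elim: n m => [|n IH] m //=; rewrite -IH.
Qed.

Lemma rsum_grid (A : R -> V -> V) (x : R -> V) (f : nat -> R) n :
  riemann_sum A x (f 0%N) (map f (iota 1 n)) =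
  \sum_(0 <= i < n) incr A (f i) (f i.+1) (x (f i)).
Proof.
by rewrite /riemann_sum zip_grid big_map /index_iota subn0.
Qed.

Lemma mesh_grid (f : nat -> R) n d : 0 < d ->
  (forall i, (i < n)%N -> f i.+1 - f i < d) ->
  mesh (f 0%N) (map f (iota 1 n)) < d.
Proof.
move=> d0 H; rewrite /mesh zip_grid big_map big_seq_cond.
apply: (big_ind (fun y => y < d)) => //.
  by move=> y z hy hz; rewrite gt_max hy hz.
move=> i /andP[]; rewrite mem_iota add0n => /andP[_ hi] _; exact: H.
Qed.

Lemma last_iota_aux m n : last m (iota m.+1 n) = (m + n)%N.
Proof. by elim: n m => [|n IH] m /=; [rewrite addn0|rewrite IH addSnnS]. Qed.

Lemma path_grid (f : nat -> R) m n : (forall i, f i < f i.+1) ->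
  path <%R (f m) (map f (iota m.+1 n)).
Proof. by move=> H; elim: n m => [|n IH] m //=; rewrite H IH. Qed.

Lemma part_grid (f : nat -> R) n : (forall i, f i < f i.+1) ->
  is_partition (f 0%N) (f n) (map f (iota 1 n)).
Proof.
move=> H; split; first exact: path_grid.
by rewrite last_map last_iota_aux.
Qed.

End Grid.
Lemma zid (W : zmodType) (a b c d e : W) : b - (c - d) = (a + b - (c - e)) - (a - (d - e)).
Proof.
rewrite -[a + b - _]addrA [a + (_ - _)]addrC addrKA opprK -addrA; congr (b + _).
by rewrite !opprB addrC subrKA.
Qed.

Section Integ.
Variable R : realType.
Variable V : normedModType R.
Variables (A : R -> V -> V) (x : R -> V).

Definition ug (s t : R) (N i : nat) : R := s + (t - s) * (i%:R / N%:R).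

Definition Dg s t N := \sum_(0 <= i < N) incr A (ug s t N i) (ug s t N i.+1) (x (ug s t N i)).

Lemma ug_diff s t N i : ug s t N i.+1 - ug s t N i = (t - s) / N%:R.
Proof. rewrite /ug -addn1 natrD; ring. Qed.

Lemma ug0 s t N : ug s t N 0 = s.
Proof. by rewrite /ug mul0r mulr0 addr0. Qed.

Lemma ugN s t N : (0 < N)%N -> ug s t N N = t.
Proof. by move=> N0; rewrite /ug divff ?pnatr_eq0 -?lt0n // mulr1 addrC subrK. Qed.

Lemma lt0_small (y : V) : (forall e : R, 0 < e -> `|y| < e) -> y = 0.
Proof.
move=> H; case: (eqVneq y 0) => // hy.
by have := H `|y|; rewrite normr_gt0 hy ltxx => /(_ isT).
Qed.

Lemma x0_eq (x0 : V) : young_integral_is A x 0 0 (x 0 - x0) -> x 0 = x0.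
Proof.
move=> H; apply/eqP; rewrite -subr_eq0; apply/eqP/lt0_small => e e0.
have [d [d0 Hd]] := H e e0.
have := Hd [::]; rewrite /riemann_sum /mesh /= !big_nil sub0r normrN.
by apply => //; split.
Qed.

Lemma integ_lim (T : R) (x0 : V) s t : 
  (forall t, 0 <= t -> t <= T -> young_integral_is A x 0 t (x t - x0)) ->
  0 <= s -> s < t -> t <= T -> forall e, 0 < e -> exists d, 0 < d /\
  forall N, (0 < N)%N -> t / N%:R < d -> `|Dg s t N - (x t - x s)| < e.
Proof.
move=> H hs hst htT e e0.
have ht : 0 <= t by apply: le_trans hs (ltW hst).
have ug_inc : forall a b N, a < b -> (0 < N)%N -> forall i, ug a b N i < ug a b N i.+1.
  move=> a b N ab N0 i; rewrite -subr_gt0 ug_diff divr_gt0 ?subr_gt0 //.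
  by rewrite ltr0n.
have [s0|s0] := eqVneq s 0.
  rewrite s0 in hst *.
  have x00 : x 0 = x0 by apply: x0_eq; apply: H => //; exact: le_trans ht htT.
  have [d [d0 Hd]] := H t ht htT e e0.
  exists d; split => // N N0 tN.
  have P := part_grid N (ug_inc 0 t N hst N0).
  rewrite ug0 ugN // in P.
  have M : mesh (ug 0 t N 0) [seq ug 0 t N i | i <- iota 1 N] < d.
    by apply: mesh_grid => // i _; rewrite ug_diff subr0.
  rewrite ug0 in M.
  have := Hd _ P M; rewrite -{1}(ug0 0 t N) rsum_grid x00.
  by [].
have sp : 0 < s by rewrite lt_neqAle eq_sym s0.
have [d1 [d10 Hd1]] := H t ht htT (e / 2) (divr_gt0 e0 (ltr0Sn R 1)).
have [d2 [d20 Hd2]] := H s hs (le_trans (ltW hst) htT) (e / 2) (divr_gt0 e0 (ltr0Sn R 1)).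
exists (Num.min d1 d2); split; first by rewrite lt_min d10 d20.
move=> N N0; rewrite lt_min => /andP[tN1 tN2].
have Ns : s / N%:R <= t / N%:R by rewrite ler_pM2r ?invr_gt0 ?ltr0n // ltW.
have Nts : (t - s) / N%:R <= t / N%:R by rewrite ler_pM2r ?invr_gt0 ?ltr0n // lerBlDr lerDl.
have P2 := part_grid N (ug_inc 0 s N sp N0).
rewrite ug0 ugN // in P2.
have M2 : mesh (ug 0 s N 0) [seq ug 0 s N i | i <- iota 1 N] < d2.
  by apply: mesh_grid => // i _; rewrite ug_diff subr0; apply: le_lt_trans tN2.
rewrite ug0 in M2.
have := Hd2 _ P2 M2; rewrite -{1}(ug0 0 s N) rsum_grid => E2.
pose f i := if (i <= N)%N then ug 0 s N i else ug s t N (i - N).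
have fge : forall i, (N <= i)%N -> f i = ug s t N (i - N).
  move=> i Ni; rewrite /f; case: leqP => // iN.
  have -> : i = N by apply/eqP; rewrite eqn_leq iN Ni.
  by rewrite subnn ug0 ugN.
have fdiff : forall i, f i.+1 - f i = if (i < N)%N then s / N%:R else (t - s) / N%:R.
  move=> i; case: ltnP => iN.
    by rewrite /f iN (ltnW iN) ug_diff subr0.
  by rewrite fge ?(leqW iN) // fge // subSn // ug_diff.
have finc : forall i, f i < f i.+1.
  move=> i; rewrite -subr_gt0 fdiff; case: ifP => _; rewrite divr_gt0 ?ltr0n ?subr_gt0 //.
have P := part_grid (N + N) finc.
have f0 : f 0%N = 0 by rewrite /f leq0n ug0.
have fNN : f (N + N) = t by rewrite fge ?leq_addr // addnK ugN.
rewrite f0 fNN in P.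
have M : mesh (f 0%N) [seq f i | i <- iota 1 (N + N)] < d1.
  apply: mesh_grid => // i _; rewrite fdiff; case: ifP => _; apply: le_lt_trans tN1 => //.
rewrite f0 in M.
have := Hd1 _ P M; rewrite -{1}f0 rsum_grid => E1.
have Esplit : \sum_(0 <= i < N + N) incr A (f i) (f i.+1) (x (f i)) = Dg 0 s N + Dg s t N.
  rewrite (big_cat_nat (n := N)) ?leq0n ?leq_addr //=; congr (_ + _).
    apply: eq_big_nat => i /andP[_ iN].
    by rewrite /f (ltnW iN) iN.
  rewrite -{1}(add0n N) big_addn addnK; apply: eq_big_nat => i _.
  have e1 : ((i + N).+1 - N)%N = i.+1 by rewrite -addSn addnK.
  by rewrite !fge ?leq_addl ?e1 ?addnK // leqW // leq_addl.
rewrite Esplit in E1.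
rewrite (zid (Dg 0 s N) _ _ _ x0).
apply: le_lt_trans (ler_normB _ _) _.
by rewrite (splitr e) ltrD.
Qed.
End Integ.
Lemma zid2 (W : zmodType) (b a d c e : W) :
  (b - a) + (d - c) - (e - a) = (d - c) - (e - b).
Proof.
rewrite [b - a + _]addrC -addrA; congr (_ + _).
by rewrite !opprB subrKA.
Qed.

Section PowFacts.
Variable R : realType.

Lemma pow1R (y : R) : 1 `^ y = 1.
Proof. by rewrite /powR oner_eq0 ln1 mulr0 expR0. Qed.

Lemma powK (K b : R) : 0 <= K -> 0 <= b -> b <= 1 -> K `^ b <= 1 + K.
Proof.
move=> K0 b0 b1; have [K1|K1] := lerP K 1.
  apply: (@le_trans _ _ 1); last by rewrite lerDl.
  by rewrite -[X in _ <= X](pow1R b) (ge0_ler_powR b0) // nnegrE.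
apply: (@le_trans _ _ K); last by rewrite lerDr.
by rewrite ler1_powR // ltW.
Qed.

Lemma powR_inv (y r : R) : 0 <= y -> (y^-1) `^ r = (y `^ r)^-1.
Proof. by move=> y0; rewrite -powR_inv1 // -powRrM mulN1r powRN. Qed.

End PowFacts.

Section Sew.
Variable R : realType.
Variable V : normedModType R.
Variables (A : R -> V -> V) (x : R -> V) (alpha beta T a K h0 : R).
Hypothesis Hhol : forall s t, 0 <= s -> s < t -> t <= T -> forall v y,
  `|incr A s t v - incr A s t y| <= a * (t - s) `^ alpha * `|v - y| `^ beta.
Hypothesis HP : forall u v, 0 <= u -> u < v -> v <= T -> v - u <= h0 ->
  `|x v - x u| <= K * (v - u) `^ alpha.
Hypotheses (a0 : 0 <= a) (K0 : 0 <= K) (al0 : 0 < alpha) (be0 : 0 < beta) (be1 : beta <= 1).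

Let th := alpha * (1 + beta).

Lemma term_bd p q r : 0 <= p -> p < q -> q < r -> r <= T -> q - p = r - q -> r - p <= h0 ->
  `|incr A p q (x p) + incr A q r (x q) - incr A p r (x p)| <= a * (1 + K) * (q - p) `^ th.
Proof.
move=> p0 pq qr rT e rh.
have q0 : 0 <= q by apply: le_trans p0 (ltW pq).
have qT : q <= T by apply: le_trans (ltW qr) rT.
rewrite /incr zid2 -/(incr A q r (x q)) -/(incr A q r (x p)).
apply: le_trans (Hhol q0 qr rT _ _) _.
have hp : 0 < q - p by rewrite subr_gt0.
have H1 : `|x q - x p| <= K * (q - p) `^ alpha.
  apply: HP => //; apply: le_trans rh; rewrite lerD2r; exact: ltW.
have H2 : `|x q - x p| `^ beta <= (1 + K) * (q - p) `^ (alpha * beta).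
  apply: le_trans (ge0_ler_powR (ltW be0) _ _ H1) _; rewrite ?nnegrE ?mulr_ge0 ?powR_ge0 //.
  rewrite powRM ?powR_ge0 // -powRrM ler_wpM2r ?powR_ge0 //.
  by apply: powK => //; exact: ltW.
rewrite -e; apply: le_trans (ler_wpM2l _ H2) _; first by rewrite mulr_ge0 ?powR_ge0.
rewrite /th [alpha * (1 + _)]mulrDr mulr1 powRD; last by apply/implyP => _; exact: lt0r_neq0.
rewrite [X in X <= _](_ : _ = a * (1 + K) * ((q - p) `^ alpha * (q - p) `^ (alpha * beta))) //.
ring.
Qed.

Lemma sum_pairs (W : zmodType) (F : nat -> W) m :
  \sum_(0 <= j < 2 * m) F j = \sum_(0 <= i < m) (F (2 * i)%N + F (2 * i).+1).
Proof.
elim: m => [|m IH]; first by rewrite muln0 !big_geq.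
have -> : (2 * m.+1 = (2 * m).+2)%N by rewrite mulnS.
by rewrite !big_nat_recr //= IH addrA.
Qed.

Variables (s t : R).
Hypotheses (s0 : 0 <= s) (st : s < t) (tT : t <= T) (th0 : t - s <= h0).

Let w := t - s.
Let D n := Dg A x s t (2 ^ n)%N.

Lemma ug_dbl N i : (0 < N)%N -> ug s t (2 * N) (2 * i) = ug s t N i.
Proof.
move=> N0; rewrite /ug !natrM -mulf_div divff ?mul1r //.
Qed.

Lemma ug_ge N i : s <= ug s t N i.
Proof.
rewrite /ug lerDl; apply: mulr_ge0; [rewrite subr_ge0; exact: ltW | exact: divr_ge0].
Qed.

Lemma ug_le N i : (0 < N)%N -> (i <= N)%N -> ug s t N i <= t.
Proof.
move=> N0 iN; rewrite /ug -lerBrDl ger_pMr ?subr_gt0 //.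
by rewrite ler_pdivrMr ?ltr0n // mul1r ler_nat.
Qed.

Lemma step_bd n : `|D n.+1 - D n| <= (2 ^ n)%:R * (a * (1 + K) * (w / (2 ^ n.+1)%:R) `^ th).
Proof.
rewrite /D /Dg expnS sum_pairs -sumrB.
apply: le_trans (ler_norm_sum _ _ _) _.
rewrite mulr_natl -[X in _ *+ X](subn0 (2 ^ n)%N) -sumr_const_nat.
apply: ler_sum_nat => i /andP[_ iN].
have N0 : (0 < 2 ^ n)%N by rewrite expn_gt0.
have e2 : (2 * i).+2 = (2 * i.+1)%N by rewrite mulnS.
rewrite e2 !ug_dbl //.
have d1 := ug_diff s t (2 * 2 ^ n) (2 * i).
have d2 := ug_diff s t (2 * 2 ^ n) (2 * i).+1.
rewrite ug_dbl // in d1; rewrite e2 ug_dbl // in d2.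
have hpos : 0 < (t - s) / (2 * 2 ^ n)%:R by rewrite divr_gt0 ?subr_gt0 ?ltr0n ?muln_gt0.
rewrite -/w -d1.
apply: term_bd.
- exact: le_trans s0 (ug_ge _ _).
- by rewrite -subr_gt0 d1.
- by rewrite -subr_gt0 d2.
- exact: le_trans (ug_le _ _) tT.
- by rewrite d1 d2.
- apply: le_trans th0; rewrite ug_diff ler_pdivrMr ?ltr0n // ler_peMr ?ler1n ?expn_gt0 //.
  by rewrite subr_ge0 ltW.
Qed.

Let q := 2 * (2 `^ th)^-1.
Let b k := (2 ^ k)%:R * (w / (2 ^ k.+1)%:R) `^ th.

Lemma b_succ k : b k.+1 = q * b k.
Proof.
rewrite /b /q.
have -> : w / (2 ^ k.+2)%:R = (w / (2 ^ k.+1)%:R) * 2^-1.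
  by rewrite (expnS 2 k.+1) natrM invfM; ring.
rewrite powRM ?divr_ge0 ?invr_ge0 ?subr_ge0 ?ltW // powR_inv // expnS natrM.
ring.
Qed.

Lemma b_sum n : (1 - q) * \sum_(0 <= k < n) b k + b n = b 0.
Proof.
elim: n => [|n IH]; first by rewrite big_geq // mulr0 add0r.
by rewrite big_nat_recr //= b_succ -IH; ring.
Qed.

Hypothesis th1 : 1 < th.

Lemma q_bds : 0 < q /\ q < 1.
Proof.
have p2 : 0 < 2 `^ th by rewrite powR_gt0.
split; first by rewrite /q mulr_gt0 ?invr_gt0.
have : 2 < 2 `^ th.
  rewrite /powR pnatr_eq0 /= -{1}(@lnK R 2) ?posrE // ltr_expR.
  by rewrite ltr_pMl // ln_gt0 // ltr1n.
by move=> h; rewrite /q ltr_pdivrMr // mul1r.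
Qed.

Lemma sew_bd n : `|D n - incr A s t (x s)| <= (1 - q)^-1 * (a * (1 + K)) * w `^ th.
Proof.
have [q0 q1] := q_bds.
have D0 : D 0%N = incr A s t (x s).
  by rewrite /D /Dg expn0 big_nat1 ug0 ugN.
rewrite -D0 -telescope_sumr //.
apply: le_trans (ler_norm_sum _ _ _) _.
apply: le_trans (ler_sum_nat (G := fun k => a * (1 + K) * b k) _) _.
  move=> k _; apply: le_trans (step_bd k) _; rewrite /b.
  by rewrite mulrCA mulrA.
rewrite -mulr_sumr.
rewrite [X in _ <= X](_ : _ = a * (1 + K) * ((1 - q)^-1 * w `^ th)); last by ring.
rewrite ler_wpM2l ?mulr_ge0 ?addr_ge0 //.
have bn0 : 0 <= b n by rewrite /b mulr_ge0 ?powR_ge0.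
have H := b_sum n.
have H2 : (1 - q) * \sum_(0 <= k < n) b k <= b 0%N by rewrite -H lerDl.
have H3 : b 0%N <= w `^ th.
  rewrite /b expn0 mul1r expn1; apply: ge0_ler_powR; first by rewrite ltW // (lt_trans _ th1).
  - by rewrite nnegrE divr_ge0 // subr_ge0 ltW.
  - by rewrite nnegrE subr_ge0 ltW.
  - by rewrite ler_pdivrMr // ler_peMr ?ler1n // subr_ge0 ltW.
rewrite mulrC ler_pdivlMr ?subr_gt0 // mulrC.
exact: le_trans H2 H3.
Qed.


Lemma sew_final (x0 : V) :
  (forall t, 0 <= t -> t <= T -> young_integral_is A x 0 t (x t - x0)) ->
  `|x t - x s - incr A s t (x s)| <= (1 - q)^-1 * (a * (1 + K)) * w `^ th.
Proof.
move=> H; apply/ler_addgt0Pr => e e0.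
have [d [d0 Hd]] := integ_lim H s0 st tT e0.
pose n := (Num.truncn (t / d)).+1.
have tn : t / (2 ^ n)%:R < d.
  rewrite ltr_pdivrMr ?ltr0n ?expn_gt0 // mulrC -ltr_pdivrMr //.
  apply: lt_le_trans (truncnS_gt _) _.
  by rewrite ler_nat ltnW // ltn_expl.
have := Hd (2 ^ n)%N; rewrite expn_gt0 => /(_ isT tn) hn.
have -> : x t - x s - incr A s t (x s) =
   (D n - incr A s t (x s)) - (D n - (x t - x s)) by rewrite (opprB (D n)) [RHS]addrC subrKA.
apply: le_trans (ler_normB _ _) _; rewrite lerD //; first exact: sew_bd.
exact: ltW.
Qed.

End Sew.
Section Iter.
Variable R : realType.
Variable V : normedModType R.

Definition Pk (x : R -> V) (alpha T K h : R) := forall u v, 0 <= u -> u < v -> v <= T -> v - u <= h ->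
  `|x v - x u| <= K * (v - u) `^ alpha.

Lemma lim0 (y c : R) : (forall n, y <= c / (2 ^ n)%:R) -> y <= 0.
Proof.
move=> H; rewrite leNgt; apply/negP => y0.
pose n := (Num.truncn (c / y)).+1.
have h1 : c / y < (2 ^ n)%:R.
  apply: lt_le_trans (truncnS_gt _) _.
  by rewrite ler_nat ltnW // ltn_expl.
have := H n; rewrite ler_pdivlMr ?ltr0n ?expn_gt0 // mulrC -ler_pdivlMr //.
by rewrite leNgt h1.
Qed.

Variables (A : R -> V -> V) (x : R -> V) (alpha beta T a h M : R) (x0 : V).
Hypothesis Hhol : forall s t, 0 <= s -> s < t -> t <= T -> forall v y,
  `|incr A s t v - incr A s t y| <= a * (t - s) `^ alpha * `|v - y| `^ beta.
Hypothesis Hsup : forall s t, 0 <= s -> s < t -> t <= T -> forall z,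
  `|incr A s t z| <= a * (t - s) `^ alpha.
Hypothesis HY : forall t, 0 <= t -> t <= T -> young_integral_is A x 0 t (x t - x0).
Hypothesis HM : Pk x alpha T M T.
Hypotheses (a0 : 0 <= a) (M0 : 0 <= M) (al0 : 0 < alpha) (al1 : alpha < 1)
  (be0 : 0 < beta) (be1 : beta <= 1) (th1 : 1 < alpha * (1 + beta)).
Hypotheses (h0 : 0 < h) (hT : h <= T).
Let c1 := (1 - 2 * (2 `^ (alpha * (1 + beta)))^-1)^-1.
Hypothesis hsmall : c1 * a * h `^ (alpha * beta) <= 2^-1.

Lemma c1_gt0 : 0 < c1.
Proof.
have p2 : 0 < 2 `^ (alpha * (1 + beta)) by rewrite powR_gt0.
have : 2 < 2 `^ (alpha * (1 + beta)).
  rewrite /powR pnatr_eq0 /= -{1}(@lnK R 2) ?posrE // ltr_expR.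
  by rewrite ltr_pMl // ln_gt0 // ltr1n.
move=> hh; rewrite /c1 invr_gt0 subr_gt0 ltr_pdivrMr // mul1r //.
Qed.

Lemma iter_step K : 0 <= K -> Pk x alpha T K h -> Pk x alpha T (a + (1 + K) / 2) h.
Proof.
move=> K0 HP u v u0 uv vT vh.
have w0 : 0 < v - u by rewrite subr_gt0.
have S := sew_final Hhol HP a0 K0 be0 be1 u0 uv vT vh th1 HY.
rewrite -/c1 in S.
have I := Hsup u0 uv vT (x u).
have E : x v - x u = incr A u v (x u) + (x v - x u - incr A u v (x u)) by rewrite [RHS]addrC subrK.
rewrite E; apply: le_trans (ler_normD _ _) _.
have pw : (v - u) `^ (alpha * (1 + beta)) <= (v - u) `^ alpha * h `^ (alpha * beta).
  rewrite mulrDr mulr1 powRD; last by apply/implyP => _; exact: lt0r_neq0.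
  rewrite ler_wpM2l ?powR_ge0 // (ge0_ler_powR _ _ _ vh) ?nnegrE ?ltW //.
  by rewrite mulr_gt0.
have S2 : c1 * (a * (1 + K)) * (v - u) `^ (alpha * (1 + beta)) <= (1 + K) / 2 * (v - u) `^ alpha.
  apply: le_trans (ler_wpM2l _ pw) _; first by rewrite mulr_ge0 ?mulr_ge0 ?addr_ge0 // ltW // c1_gt0.
  rewrite [X in X <= _](_ : _ = (1 + K) * (v - u) `^ alpha * (c1 * a * h `^ (alpha * beta))); last by ring.
  rewrite [X in _ <= X](_ : _ = (1 + K) * (v - u) `^ alpha * 2^-1); last by ring.
  by rewrite ler_wpM2l // mulr_ge0 ?powR_ge0 ?addr_ge0.
rewrite mulrDl; apply: lerD => //; exact: le_trans S S2.
Qed.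

Lemma iter_all n : Pk x alpha T (2 * a + 1 + M / (2 ^ n)%:R) h.
Proof.
elim: n => [|n IH].
  move=> u v u0 uv vT vh; apply: le_trans (HM u0 uv vT _) _.
    by apply: le_trans vh hT.
  rewrite ler_wpM2r ?powR_ge0 // expn0 divr1 lerDr.
  by rewrite addr_ge0 ?mulr_ge0.
have K0 : 0 <= 2 * a + 1 + M / (2 ^ n)%:R by rewrite !addr_ge0 ?mulr_ge0 ?divr_ge0.
have := iter_step K0 IH.
suff -> : a + (1 + (2 * a + 1 + M / (2 ^ n)%:R)) / 2 = 2 * a + 1 + M / (2 ^ n.+1)%:R by [].
rewrite expnS natrM; field.
by rewrite pnatr_eq0 expn_eq0.
Qed.

Lemma P_lim : Pk x alpha T (2 * a + 1) h.
Proof.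
move=> u v u0 uv vT vh.
rewrite -subr_le0; apply: (@lim0 _ (M * (v - u) `^ alpha)) => n.
have := iter_all n u0 uv vT vh.
rewrite lerBlDl => hh; apply: le_trans hh _.
rewrite [X in _ <= X](_ : _ = (2 * a + 1 + M / (2 ^ n)%:R) * (v - u) `^ alpha) //.
ring.
Qed.

End Iter.
Section Patch.
Variable R : realType.
Variable V : normedModType R.

Lemma patch (x : R -> V) (alpha T K h : R) : 0 < alpha -> alpha < 1 -> 0 <= K ->
  0 < h -> h <= T -> Pk x alpha T K h ->
  forall s t, 0 <= s -> s < t -> t <= T ->
  `|x t - x s| <= K * (2 * T / h) `^ (1 - alpha) * (t - s) `^ alpha.
Proof.
move=> al0 al1 K0 h0 hT HP s t s0 st tT.
have T0 : 0 < T by apply: lt_le_trans hT.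
have G1 : 1 <= 2 * T / h.
  rewrite ler_pdivlMr // mul1r; apply: le_trans hT _.
  by rewrite ler_peMl ?ler1n ?(ltW T0).
have Gp : 1 <= (2 * T / h) `^ (1 - alpha).
  by rewrite -[X in X <= _](powRr0 (2 * T / h)) ler_powR // subr_ge0 ltW.
have w0 : 0 < t - s by rewrite subr_gt0.
have [wh|wh] := lerP (t - s) h.
  apply: le_trans (HP s t s0 st tT wh) _.
  by rewrite ler_wpM2r ?powR_ge0 // ler_peMr.
pose n := (Num.truncn ((t - s) / h)).+1.
have n0 : (0 < n)%N by [].
have nR0 : 0 < n%:R :> R by rewrite ltr0n.
have wn : (t - s) / h < n%:R by exact: truncnS_gt.
have E : \sum_(0 <= i < n) (x (ug s t n i.+1) - x (ug s t n i)) = x t - x s.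
  by rewrite (telescope_sumr (fun i => x (ug s t n i))) // ug0 ugN.
rewrite -E; apply: le_trans (ler_norm_sum _ _ _) _.
apply: le_trans (ler_sum_nat (G := fun _ => K * ((t - s) / n%:R) `^ alpha) _) _.
  move=> i /andP[_ iN].
  have d := ug_diff s t n i.
  rewrite -d; apply: HP.
  - exact: le_trans s0 (ug_ge st _ _).
  - by rewrite -subr_gt0 d divr_gt0.
  - by apply: le_trans tT; apply: ug_le.
  - by rewrite d ler_pdivrMr // mulrC -ler_pdivrMr // ltW.
rewrite sumr_const_nat subn0 -[K * _ *+ n]mulr_natl.
have pn : n%:R * ((t - s) / n%:R) `^ alpha = n%:R `^ (1 - alpha) * (t - s) `^ alpha.
  rewrite powRM ?invr_ge0 ?ltW // powR_inv ?ltW // powRB; last by rewrite gt_eqF ?implybT.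
  rewrite powRr1 ?ltW //; ring.
rewrite mulrCA pn mulrA ler_wpM2r ?powR_ge0 // ler_wpM2l //.
apply: ge0_ler_powR.
- by rewrite subr_ge0 ltW.
- by rewrite nnegrE ler0n.
- by rewrite nnegrE; apply: le_trans G1.
have : n%:R <= (t - s) / h + 1.
  by rewrite -natr1 lerD2r truncn_le divr_ge0 ?ltW.
move=> hn; apply: le_trans hn _.
have wT : t - s <= T by rewrite lerBlDr; apply: le_trans tT _; rewrite lerDl.
have w1 : 1 <= (t - s) / h by rewrite ler_pdivlMr // mul1r ltW.
apply: le_trans (_ : 2 * ((t - s) / h) <= _).
  lra.
by rewrite -mulrA ler_pM2l // ler_pM2r ?invr_gt0.
Qed.

End Patch.
Unset Implicit Arguments.

Theorem mainTheorem11 (R : realType) (alpha beta T : R) :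
  0 < T -> 1 / 2 < alpha -> alpha < 1 -> 0 < beta -> beta < 1 ->
  1 < alpha * (1 + beta) ->
  exists C : R,
  forall (V : completeNormedModType R) (A : R -> V -> V) (x0 : V) (x : R -> V)
         (a : R),
    separable V ->
    (forall v : V, A 0 v = 0) ->
    field_norm alpha beta T A = a%:E ->
    (hoelder_norm alpha T x < +oo)%E ->
    (forall t : R, 0 <= t -> t <= T -> young_integral_is A x 0 t (x t - x0)) ->
    (hoelder_semi alpha T x <= (C * (1 + a ^+ 2))%:E)%E /\
    (hoelder_norm alpha T x <= (C * (1 + `|x0| + a ^+ 2))%:E)%E.
Proof.
move=> T0 alh al1 be0 be1 th1.
have al0 : 0 < alpha by apply: lt_trans alh; rewrite divr_gt0.
have c10 := c1_gt0 th1.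
set c1 := (1 - 2 / 2 `^ (alpha * (1 + beta)))^-1 in c10.
pose T' := T `^ (1 - alpha).
have T'0 : 0 <= T' by rewrite powR_ge0.
pose C0 := 2 * (2 + 2 * T') + 3 * (4 * T' * c1).
have Tc : 0 <= T' * c1 by rewrite mulr_ge0 // ltW.
have C00 : 0 <= C0 by rewrite /C0; nra.
have Ta0 : 0 <= T `^ alpha by rewrite powR_ge0.
exists (C0 * (1 + T `^ alpha) + 1).
have C0C : C0 <= C0 * (1 + T `^ alpha) + 1.
  nra.
have C0p : 0 <= C0 * (1 + T `^ alpha) + 1 by nra.
move=> V A x0 x a sep HA0 Ha Hfin HY.
have [triv|[w w0]] : (forall w : V, w = 0) \/ (exists w : V, w != 0).
  case: (pselect (exists w : V, w != 0)) => [|hn]; [by right | left => w].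
  by apply/eqP/negPn/negP => hw; apply: hn; exists w.
  have a2 : 0 <= a ^+ 2 by rewrite sqr_ge0.
  have H1 : (hoelder_semi alpha T x <= 0%:E)%E.
    by apply: semi_ub => s t _ _ _; rewrite (triv (x t - x s)) normr0 mul0r.
  have H2 : (sup_norm T x <= 0%:E)%E.
    by apply: supn_ub => t _ _; rewrite (triv (x t)) normr0.
  split.
    by apply: le_trans H1 _; rewrite lee_fin mulr_ge0 // addr_ge0.
  apply: le_trans (leeD H2 H1) _; rewrite adde0 lee_fin mulr_ge0 // !addr_ge0 //.
have [a0 Hhol Hsup] := field_bds w0 T0 Ha.
have [M HM] := semi_fin T0 Hfin.
have M0 : 0 <= M.
  have := le_trans (normr_ge0 _) (HM 0 T (lexx 0) T0 (lexx T)).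
  by rewrite pmulr_lge0 // powR_gt0 // subr0.
have HM' : Pk x alpha T M T by move=> u v u0 uv vT _; exact: HM.
have x00 : x 0 = x0 by apply: x0_eq; apply: HY => //; exact: ltW.
have be1' : beta <= 1 by exact: ltW.
pose rho := alpha * beta.
have rho0 : 0 < rho by rewrite mulr_gt0.
pose L := 2 * c1 * a + 1.
have L1 : 1 <= L by rewrite /L lerDr !mulr_ge0 // ltW.
have L0 : 0 < L by apply: lt_le_trans L1.
pose m := L `^ (- rho^-1).
have m0 : 0 < m by rewrite powR_gt0.
pose h := Num.min T m.
have h0 : 0 < h by rewrite lt_min T0 m0.
have hT : h <= T by rewrite ge_min lexx.
have hm : h <= m by rewrite ge_min lexx orbT.
have hsmall : c1 * a * h `^ (alpha * beta) <= 2^-1.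
  have hr : h `^ rho <= L^-1.
    have hn : h \is Num.nneg by rewrite nnegrE ltW.
    have mn : m \is Num.nneg by rewrite nnegrE ltW.
    apply: le_trans (ge0_ler_powR (ltW rho0) hn mn hm) _.
    by rewrite /m -powRrM mulNr mulVf ?gt_eqF // powR_inv1 // ltW.
  apply: le_trans (ler_wpM2l _ hr) _; first by rewrite mulr_ge0 // ltW.
  rewrite -/(_ / _) ler_pdivrMr // /L; lra.
have HPl := P_lim Hhol Hsup HY HM' a0 M0 al0 be0 be1' th1 h0 hT hsmall.
have a21 : 0 <= 2 * a + 1 by rewrite addr_ge0 ?mulr_ge0.
have HK := patch al0 al1 a21 h0 hT HPl.
have ex1 : rho^-1 * (1 - alpha) <= 1.
  rewrite mulrC -/(_ / _) ler_pdivrMr // mul1r /rho.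
  by move: th1; rewrite mulrDr mulr1; lra.
have al1' : 1 - alpha <= 1 by rewrite lerBlDr lerDl ltW.
have p2 : 2 `^ (1 - alpha) <= 2 by rewrite ler1_powR // ler1n.
have T'L : 0 <= T' * L by rewrite mulr_ge0 // ltW.
have Gb : (2 * T / h) `^ (1 - alpha) <= 2 + 2 * T' * L.
  have [Tm|mT] := leP T m.
    rewrite /h (min_l Tm) mulfK ?gt_eqF //.
    apply: le_trans p2 _; rewrite lerDl -mulrA mulr_ge0 //.
  rewrite /h (min_r (ltW mT)) /m powRN invrK.
  rewrite (@powRM _ (2 * T)) ?mulr_ge0 ?powR_ge0 ?(ltW T0) // (@powRM _ 2 T) ?(ltW T0) //.
  rewrite -powRrM -/T'.
  have pL : L `^ (rho^-1 * (1 - alpha)) <= L by rewrite -[X in _ <= X](powRr1 (ltW L0)) ler_powR.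
  apply: (@le_trans _ _ (2 * T' * L)); last by rewrite lerDr.
  rewrite -mulrA -[X in _ <= X]mulrA; apply: ler_pM; rewrite ?powR_ge0 ?mulr_ge0 //.
  - exact: powR_ge0.
  - by rewrite ler_wpM2l.
pose Kst := C0 * (1 + a ^+ 2).
have KK : (2 * a + 1) * (2 + 2 * T' * L) <= Kst.
  pose P := 2 + 2 * T'.
  pose Q := 4 * T' * c1.
  have P0 : 0 <= P by rewrite /P addr_ge0 ?mulr_ge0.
  have Q0 : 0 <= Q by rewrite /Q mulr_ge0 ?mulr_ge0 // ltW.
  have h1 : 0 <= P * ((a - 1) ^+ 2 + a ^+ 2) by rewrite mulr_ge0 // addr_ge0 ?sqr_ge0.
  have h2 : 0 <= Q * ((a - 1) ^+ 2 + a + 2) by rewrite mulr_ge0 // !addr_ge0 ?sqr_ge0.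
  have -> : (2 * a + 1) * (2 + 2 * T' * L) = (2 * a + 1) * (P + Q * a).
    by rewrite /P /Q /L; ring.
  rewrite /Kst /C0 -/P -/Q.
  nra.
have HKs : forall s t, 0 <= s -> s < t -> t <= T -> `|x t - x s| <= Kst * (t - s) `^ alpha.
  move=> s t s0 st tT; apply: le_trans (HK s t s0 st tT) _.
  rewrite ler_wpM2r ?powR_ge0 //; apply: le_trans KK.
  by rewrite ler_wpM2l.
have Kst0 : 0 <= Kst by rewrite mulr_ge0 // addr_ge0 ?sqr_ge0.
have semiK : (hoelder_semi alpha T x <= Kst%:E)%E by apply: semi_ub.
have supK : (sup_norm T x <= (`|x0| + Kst * T `^ alpha)%:E)%E.
  apply: supn_ub => t t0 tT.
  have [->|tn0] := eqVneq t 0.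
    by rewrite x00 lerDl mulr_ge0.
  have tp : 0 < t by rewrite lt_neqAle eq_sym tn0.
  have -> : x t = x0 + (x t - x 0) by rewrite x00 addrC subrK.
  apply: le_trans (ler_normD _ _) _; rewrite lerD2l.
  apply: le_trans (HKs 0 t (lexx 0) tp tT) _; rewrite subr0 ler_wpM2l //.
  by apply: ge0_ler_powR; rewrite ?nnegrE //; apply: ltW.
split.
  apply: le_trans semiK _; rewrite lee_fin /Kst ler_wpM2r // addr_ge0 ?sqr_ge0 //.
rewrite /hoelder_norm; apply: le_trans (leeD supK semiK) _.
rewrite -EFinD lee_fin.
have hx : 0 <= C0 * (1 + T `^ alpha) * `|x0| by rewrite !mulr_ge0 // addr_ge0.
have a2 : 0 <= a ^+ 2 by rewrite sqr_ge0.
rewrite /Kst; nra.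
Qed.
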